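(* Let $f = \sum_{i=0}^{n} c_i x^{k_i} \in \mathbb{N}_0[x^{\pm 1}]$, with $c_0,\ldots,c_n$ positive integers and $k_0 > \cdots > k_n$ integers, and suppose $|\operatorname{supp}(f)| > 1$. Then $f$ is irreducible in $\mathbb{N}_0[x^{\pm 1}]$ if and only if $f$ is monolithic and $\gcd(c_0,\ldots,c_n) = 1$.
   Context: $\mathbb{N}_0[x^{\pm 1}]$ denotes the semiring of Laurent polynomials in $x$ with nonnegative integer coefficients; $\operatorname{supp}(f)$ is the set of exponents occurring in $f$ with nonzero coefficient. The units of $\mathbb{N}_0[x^{\pm 1}]$ are exactly $x^k$, $k\in\mathbb{Z}$. An element $f$ is irreducible if it is nonzero, not a unit, and whenever $f = gh$ one of $g,h$ is a unit. A nonzero $f \in \mathbb{N}_0[x^{\pm 1}]$ is monolithic if whenever $f = gh$ with $g,h \in \mathbb{N}_0[x^{\pm 1}]$, one of $g, h$ is a monomial, i.e. of the form $c x^k$ with $c$ a positive integer and $k \in \mathbb{Z}$. *)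

(* Defs.v *)
From mathcomp Require Import all_boot all_algebra.
Set Implicit Arguments. Unset Strict Implicit. Unset Printing Implicit Defensive.
Import GRing.Theory.

(* The semiring N_0[x^{+-1}] of Laurent polynomials with nonnegative integer
   coefficients.  An element is represented as x^(lshift f) * (lpol f) with
   lpol f an ordinary polynomial with coefficients in nat.  Two representations
   denote the same element iff they have the same coefficient function
   [coefL], so all notions below are stated up to [eqL]. *)
Record lpoly := LP { lshift : int; lpol : {poly nat} }.

Definition coefL (f : lpoly) (i : int) : nat :=
  if (lshift f <= i)%R then ((lpol f)`_(absz (i - lshift f)))%R else 0%N.

Definition eqL (f g : lpoly) : Prop := forall i, coefL f i = coefL g i.

Definition mulL (f g : lpoly) : lpoly :=
  LP (lshift f + lshift g)%R (lpol f * lpol g)%R.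

Definition zeroL : lpoly := LP 0%R 0%R.
Definition oneL : lpoly := LP 0%R 1%R.

Definition monoL (c : nat) (k : int) : lpoly := LP k (c%:R)%:P.

Definition suppL (f : lpoly) : int -> Prop := fun i => coefL f i <> 0%N.

Definition unitL (u : lpoly) : Prop := exists v, eqL (mulL u v) oneL.

Definition irreducibleL (f : lpoly) : Prop :=
  ~ eqL f zeroL /\ ~ unitL f /\
  forall g h, eqL f (mulL g h) -> unitL g \/ unitL h.

Definition monomialL (g : lpoly) : Prop :=
  exists c k, (0 < c)%N /\ eqL g (monoL c k).

Definition monolithicL (f : lpoly) : Prop :=
  ~ eqL f zeroL /\
  forall g h, eqL f (mulL g h) -> monomialL g \/ monomialL h.

(* Main.v *)
Require Import Defs.
From mathcomp Require Import all_boot all_order all_algebra zify.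
Import Order.TTheory GRing.Theory Num.Theory.
Set Implicit Arguments. Unset Strict Implicit.
Local Open Scope ring_scope.
Import Defs.

Lemma coefL_in (f : lpoly) (i : nat) : coefL f (lshift f + i%:Z)%R = (lpol f)`_i.
Proof. rewrite /coefL ifT; last by lia. congr nth; lia. Qed.

Lemma coefL_lt (f : lpoly) e : (e < lshift f)%R -> coefL f e = 0%N.
Proof. by move=> h; rewrite /coefL ifF //; lia. Qed.

Lemma coefL_ge (f : lpoly) e : (lshift f <= e)%R -> coefL f e = (lpol f)`_(absz (e - lshift f)).
Proof. by move=> h; rewrite /coefL ifT. Qed.

Lemma polyM_ge (p q : {poly nat}) i j : leq (nth 0%N p i * nth 0%N q j) (nth 0%N (p * q)%R (i + j)).
Proof.
rewrite coefM (bigD1 (@Ordinal (i + j).+1 i (leq_addr j i))) //= addKn.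
exact: leq_addr.
Qed.

Lemma coefL_mul_ge g h a b : (coefL g a * coefL h b <= coefL (mulL g h) (a + b)%R)%N.
Proof.
have [ha|ha] := ltrP a (lshift g); first by rewrite coefL_lt.
have [hb|hb] := ltrP b (lshift h); first by rewrite (coefL_lt hb) muln0.
rewrite !coefL_ge //=; last by lia.
have -> : absz (a + b - (lshift g + lshift h))%R = (absz (a - lshift g)%R + absz (b - lshift h)%R)%N by lia.
exact: polyM_ge.
Qed.

Lemma coefL_mono c k a : coefL (monoL c k) a = if a == k then c else 0%N.
Proof.
rewrite /coefL /=. have [->|ne] := eqVneq a k.
  by rewrite lexx subrr /= coefC /= natn.
case: ifP => h //; rewrite coefC; case: ifP => //; lia.
Qed.

Lemma coefL_mulmono g h c k : (0 < c)%N ->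
  (forall a, coefL g a = if a == k then c else 0%N) ->
  forall e, coefL (mulL g h) e = (c * coefL h (e - k)%R)%N.
Proof.
move=> c0 hg e.
have hk : (lshift g <= k)%R.
  case: (lerP (lshift g) k) => // hlt; move: (hg k); rewrite eqxx coefL_lt //; lia.
set j := absz (k - lshift g)%R.
have hp : lpol g = (c%:P * 'X^j)%R.
  apply/polyP => i; rewrite coefCM coefXn -coefL_in hg.
  case: eqP; case: eqP => //; rewrite /j; lia.
rewrite /coefL /mulL /= hp -mulrA coefCM coefXnM.
repeat (case: ifP => ?); rewrite ?muln0 //; try lia.
congr (_ * nth _ _ _)%N; lia.
Qed.

Lemma mulLC g h : mulL g h = mulL h g.
Proof. by rewrite /mulL addrC mulrC. Qed.

Lemma coefL0 g : lpol g = 0 -> forall a, coefL g a = 0%N.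
Proof. by move=> h a; rewrite /coefL h coef0; case: ifP. Qed.

Lemma coefL_nz g : lpol g != 0 -> exists a, coefL g a <> 0%N.
Proof.
move=> h; exists (lshift g + (size (lpol g)).-1%:Z)%R.
rewrite coefL_in; apply/eqP; by rewrite -lead_coefE lead_coef_eq0.
Qed.

Lemma oneL_mono : oneL = monoL 1 0.
Proof. by rewrite /oneL /monoL. Qed.

Lemma coefL_one e : coefL oneL e = if e == 0 then 1%N else 0%N.
Proof. by rewrite oneL_mono coefL_mono. Qed.

Lemma mulL_0 g h : lpol g = 0 -> forall e, coefL (mulL g h) e = 0%N.
Proof. by move=> hg; apply: coefL0; rewrite /= hg mul0r. Qed.

Lemma unit_mono u : unitL u ->
  exists a0, coefL u a0 = 1%N /\ forall a, coefL u a <> 0%N -> a = a0.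
Proof.
case=> v hv.
have [u0|u0] := eqVneq (lpol u) 0.
  by move: (hv 0); rewrite mulL_0 // coefL_one.
have [v0|v0] := eqVneq (lpol v) 0.
  by move: (hv 0); rewrite mulLC mulL_0 // coefL_one.
case: (coefL_nz u0) => a1 ha1; case: (coefL_nz v0) => b hb.
have key : forall a, coefL u a <> 0%N -> a = - b /\ (coefL u a * coefL v b <= 1)%N.
  move=> a ha; have := coefL_mul_ge u v a b; rewrite hv coefL_one.
  case: eqP => [e|_]; last by nia.
  by split=> //; apply/eqP; rewrite -(subr0 a) -e opprD addrA subrr add0r.
exists (- b); split; last by move=> a /key [].
have [e1 le1] := key _ ha1; rewrite -e1; nia.
Qed.

Lemma unit_monomial u : unitL u -> monomialL u.
Proof.
case/unit_mono=> a0 [h1 h2]; exists 1%N, a0; split=> // a.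
rewrite coefL_mono; case: eqP => [->//|ne].
case E: (coefL u a) => [//|m]; exfalso; apply: ne; apply: h2; by rewrite E.
Qed.

Theorem lemma2p4 (n : nat) (c : 'I_n.+1 -> nat) (k : 'I_n.+1 -> int)
  (f : lpoly)
  (hc : forall i, (0 < c i)%N)
  (hk : forall i j : 'I_n.+1, (i < j)%N -> (k j < k i)%R)
  (hf : forall e : int,
        coefL f e = (\sum_(i < n.+1) (if k i == e then c i else 0%N))%N)
  (hsupp : exists a b : int, a <> b /\ suppL f a /\ suppL f b) :
  irreducibleL f <->
  (monolithicL f /\ (\big[gcdn/0%N]_(i < n.+1) c i)%N = 1%N).
Proof.
have hinj : forall i j, k i = k j -> i = j.
  move=> i j e; apply/val_inj.
  by case: (ltngtP i j) => [/hk|/hk|//]; rewrite e ltxx.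
have coef_ki : forall i, coefL f (k i) = c i.
  move=> i; rewrite hf (bigD1 i) //= eqxx big1 ?addn0 // => j ne.
  case: eqP => // /hinj e; by rewrite e eqxx in ne.
have dvd_coef : forall d, (forall i, (d %| c i)%N) -> forall e, (d %| coefL f e)%N.
  move=> d hd e; rewrite hf; apply: dvdn_sum => i _; case: ifP => _ //.
case: hsupp => a [b [ab [sa sb]]].
have notunit : forall u, unitL u -> (forall e, coefL f e <> 0%N -> coefL u e <> 0%N) -> False.
  move=> u /unit_mono [a0 [_ H]] hs.
  by apply: ab; rewrite (H a (hs a sa)) (H b (hs b sb)).
split.
- move=> [fnz [fnu irr]]; split.
    split=> // g h /irr [] /unit_monomial; by [left | right].
  set d := \big[gcdn/0%N]_(i < n.+1) c i.
  have hd : forall i, (d %| c i)%N by move=> i; rewrite /d; apply: (biggcdn_inf i).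
  have dpos : (0 < d)%N.
    rewrite lt0n; apply/eqP => d0; have := hd ord0; rewrite d0 dvd0n => /eqP h0; have := hc ord0; by rewrite h0.
  have hde := dvd_coef d hd.
  pose h := LP (lshift f) (\poly_(i < size (lpol f)) (nth 0%N (lpol f) i %/ d)%N).
  have hfe : forall e, coefL f e = coefL (mulL (monoL d 0) h) e.
    move=> e; rewrite (coefL_mulmono h dpos (coefL_mono d 0)) subr0.
    rewrite /coefL /=; case: ifP => he; last by rewrite muln0.
    rewrite coef_poly; case: ifP => hs.
      rewrite mulnC divnK //; have := hde e; by rewrite coefL_ge.
    rewrite muln0 nth_default //; move/negbT: hs; by rewrite -leqNgt.
  case: (irr _ _ hfe) => hu.
    case/unit_mono: hu => a0 [h1 h2].
    have h3 := h2 0; rewrite coefL_mono eqxx in h3.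
    have e0 : 0 = a0 by apply: h3; lia.
    by move: h1; rewrite coefL_mono -e0 eqxx.
  exfalso; apply: (notunit h hu).
  move=> e; rewrite hfe (coefL_mulmono h dpos (coefL_mono d 0)) subr0; nia.
- move=> [[fnz mono] g1].
  have key : forall g h, eqL f (mulL g h) -> monomialL g -> unitL g.
    move=> g h hgh [cc [kk [cpos heq]]].
    have hg : forall x, coefL g x = if x == kk then cc else 0%N.
      by move=> x; rewrite heq coefL_mono.
    have : (cc %| 1)%N.
      rewrite -g1; apply/dvdn_biggcdP => i _.
      by rewrite -coef_ki hgh (coefL_mulmono h cpos hg) dvdn_mulr.
    rewrite dvdn1 => /eqP c1.
    exists (monoL 1 (- kk)) => e.
    rewrite (coefL_mulmono _ cpos hg) coefL_mono coefL_one c1 mul1n.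
    case: eqP; case: eqP => //; lia.
  split=> //; split.
    by move/unit_mono => [a0 [_ H]]; apply: ab; rewrite (H a sa) (H b sb).
  move=> g h hgh; case: (mono g h hgh) => hm.
    by left; apply: key hgh hm.
  by right; apply: (key h g) hm; rewrite -mulLC.
Qed.
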